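(* Let $S$ be a finitely generated left cancellative semigroup with no infinite $\mathcal{R}$-classes. Suppose that for some finite generating set $A$ of $S$, the right Cayley graph $\Gamma_r(S,A)$ contains a ray $\mathbf{r}$ and there is an element $s\in S$ such that there are (directed) paths in $\Gamma_r(S,A)$ from infinitely many vertices of $\mathbf{r}$ to $s$. Then $\Omega S$ is infinite.
   Context: $S$ is left cancellative if $ax=ay$ implies $x=y$. $\mathcal{R}$ is Green's relation: $x\,\mathcal{R}\,y$ iff $xS^1=yS^1$. A digraph on $\Omega$ is a subset $\Gamma\subseteq\Omega\times\Omega$. A path is a sequence of pairwise distinct vertices $(v_0,v_1,\ldots)$ with $(v_i,v_{i+1})\in\Gamma$ (length 0 allowed); a ray is an infinite path; an anti-ray is an infinite sequence of distinct vertices with $(v_{i+1},v_i)\in\Gamma$. For infinite $\Sigma',\Sigma\subseteq\Omega$, $\Sigma'\preccurlyeq\Sigma$ means there are infinitely many pairwise vertex-disjoint paths from vertices of $\Sigma'$ to vertices of $\Sigma$. On rays and anti-rays $\preccurlyeq$ is a preorder with associated equivalence $\approx$; the ends are the $\approx$-classes of rays and anti-rays, and $\Omega\Gamma$ is the poset of ends. The right Cayley graph $\Gamma_r(S,A)$ has vertex set $S$ and edges $(x,xa)$, $x\in S$, $a\in A$. For finitely generated $S$, $\Omega S:=\Omega\Gamma_r(S,A)$ for any finite generating set $A$ (well defined up to isomorphism). *)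

(* Defs.v *)
From Stdlib Require Import List Classical.
Import ListNotations.
Set Implicit Arguments.

Definition finite_set {T : Type} (P : T -> Prop) : Prop :=
  exists l : list T, forall x, P x -> In x l.
Definition infinite_set {T : Type} (P : T -> Prop) : Prop := ~ finite_set P.

Definition associative {S : Type} (mul : S -> S -> S) : Prop :=
  forall x y z, mul x (mul y z) = mul (mul x y) z.

Definition left_cancellative {S : Type} (mul : S -> S -> S) : Prop :=
  forall a x y, mul a x = mul a y -> x = y.

Definition in_xS1 {S : Type} (mul : S -> S -> S) (x z : S) : Prop :=
  z = x \/ exists u, z = mul x u.

Definition greenR {S : Type} (mul : S -> S -> S) (x y : S) : Prop :=
  forall z, in_xS1 mul x z <-> in_xS1 mul y z.

Definition no_infinite_R_classes {S : Type} (mul : S -> S -> S) : Prop :=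
  forall x, finite_set (greenR mul x).

Inductive generated {S : Type} (mul : S -> S -> S) (A : list S) : S -> Prop :=
| gen_base : forall a, In a A -> generated mul A a
| gen_mul : forall x y, generated mul A x -> generated mul A y ->
            generated mul A (mul x y).

Definition generates {S : Type} (mul : S -> S -> S) (A : list S) : Prop :=
  forall x, generated mul A x.

Definition digraph (T : Type) := T -> T -> Prop.

Definition right_cayley {S : Type} (mul : S -> S -> S) (A : list S) : digraph S :=
  fun x y => exists a, In a A /\ y = mul x a.

Fixpoint chain {T : Type} (G : digraph T) (p : list T) : Prop :=
  match p with
  | x :: ((y :: _) as q) => G x y /\ chain G q
  | _ => True
  end.

Definition is_path {T : Type} (G : digraph T) (p : list T) : Prop :=
  p <> [] /\ NoDup p /\ chain G p.

Definition path_from_to {T : Type} (G : digraph T) (p : list T) (u v : T) : Prop :=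
  is_path G p /\ hd_error p = Some u /\ last p u = v.

Definition is_ray {T : Type} (G : digraph T) (r : nat -> T) : Prop :=
  (forall i j, r i = r j -> i = j) /\ (forall i, G (r i) (r (S i))).

Definition is_antiray {T : Type} (G : digraph T) (r : nat -> T) : Prop :=
  (forall i j, r i = r j -> i = j) /\ (forall i, G (r (S i)) (r i)).

Definition is_ray_or_antiray {T : Type} (G : digraph T) (r : nat -> T) : Prop :=
  is_ray G r \/ is_antiray G r.

Definition vertices {T : Type} (r : nat -> T) : T -> Prop :=
  fun v => exists i, r i = v.

Definition preceq {T : Type} (G : digraph T) (Sig' Sig : T -> Prop) : Prop :=
  exists P : nat -> list T,
    (forall n, exists u v, Sig' u /\ Sig v /\ path_from_to G (P n) u v) /\
    (forall n m x, n <> m -> In x (P n) -> In x (P m) -> False).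

Definition end_equiv {T : Type} (G : digraph T) (r r' : nat -> T) : Prop :=
  preceq G (vertices r) (vertices r') /\ preceq G (vertices r') (vertices r).

Definition is_end {T : Type} (G : digraph T) (E : (nat -> T) -> Prop) : Prop :=
  exists r, is_ray_or_antiray G r /\
    forall r', E r' <-> (is_ray_or_antiray G r' /\ end_equiv G r r').

Definition ends_infinite {T : Type} (G : digraph T) : Prop :=
  infinite_set (is_end G).

(* Main.v *)
Require Import Defs.
From Stdlib Require Import List Classical.
From Stdlib Require Import Lia FinFun PeanoNat.
Import ListNotations.

Lemma pigeon (T : Type) (f : nat -> T) (l : list T) :
  (forall i j, f i = f j -> i = j) -> (forall n, In (f n) l) -> False.
Proof.
  intros Hi Hl.
  assert (H : NoDup (map f (seq 0 (S (length l))))).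
  { apply Injective_map_NoDup; [exact Hi | apply seq_NoDup]. }
  assert (H2 : incl (map f (seq 0 (S (length l)))) l).
  { intros x Hx. apply in_map_iff in Hx. destruct Hx as [n [<- _]]. apply Hl. }
  pose proof (NoDup_incl_length H H2) as H3.
  rewrite length_map, length_seq in H3. lia.
Qed.

Section Main.
Variables (S : Type) (mul : S -> S -> S) (A : list S).
Hypothesis Hassoc : associative mul.
Hypothesis Hlc : left_cancellative mul.

Lemma xs_refl x : in_xS1 mul x x.
Proof. left; reflexivity. Qed.

Lemma xs_trans x y z : in_xS1 mul x y -> in_xS1 mul y z -> in_xS1 mul x z.
Proof.
  intros [H1|[u H1]] [H2|[v H2]]; subst; unfold in_xS1.
  - left; reflexivity.
  - right; exists v; reflexivity.
  - right; exists u; reflexivity.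
  - right; exists (mul u v). rewrite Hassoc. reflexivity.
Qed.

Lemma chain_xs p : forall u d, chain (right_cayley mul A) (u :: p) ->
  in_xS1 mul u (last (u :: p) d).
Proof.
  induction p as [|a p IH]; intros u d H.
  - apply xs_refl.
  - destruct H as [[b [_ ->]] Hc].
    change (last (u :: mul u b :: p) d) with (last (mul u b :: p) d).
    apply xs_trans with (mul u b). right; exists b; reflexivity.
    apply IH; exact Hc.
Qed.

Lemma path_xs p u v : path_from_to (right_cayley mul A) p u v -> in_xS1 mul u v.
Proof.
  intros [[_ [_ Hc]] [Hh Hlast]].
  destruct p as [|x p]; [discriminate|]. injection Hh as ->.
  rewrite <- Hlast. apply chain_xs; exact Hc.
Qed.

Variable s : S.
Definition pw (k : nat) (x : S) : S := Nat.iter k (mul s) x.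

Lemma pw_mul k x u : pw k (mul x u) = mul (pw k x) u.
Proof.
  induction k; simpl. reflexivity.
  change (mul s (pw k (mul x u)) = mul (mul s (pw k x)) u).
  rewrite IHk, Hassoc. reflexivity.
Qed.

Lemma pw_inj k x y : pw k x = pw k y -> x = y.
Proof.
  induction k; simpl; auto.
  intros H. apply IHk. eapply Hlc; exact H.
Qed.

Lemma pw_cancel j a b : in_xS1 mul (pw j a) (pw j b) -> in_xS1 mul a b.
Proof.
  intros [H|[u H]].
  - left. apply (pw_inj j). exact H.
  - right. exists u. apply (pw_inj j). rewrite pw_mul. exact H.
Qed.

Variable r : nat -> S.
Hypothesis Hr : is_ray (right_cayley mul A) r.

Lemma ray_xs M d : in_xS1 mul (r M) (r (d + M)).
Proof.
  induction d. apply xs_refl.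
  apply xs_trans with (r (d + M)); auto.
  destruct Hr as [_ He]. destruct (He (d + M)) as [a [_ Ha]].
  simpl. rewrite Ha. right; exists a; reflexivity.
Qed.

Lemma ray_pw_is_ray k : is_ray (right_cayley mul A) (fun i => pw k (r i)).
Proof.
  destruct Hr as [Hi He]. split.
  - intros i j H. apply Hi. eapply pw_inj; exact H.
  - intros i. destruct (He i) as [a [Ha Heq]]. exists a. split; auto.
    rewrite Heq, pw_mul. reflexivity.
Qed.

Hypothesis HR : no_infinite_R_classes mul.
Hypothesis Hs : infinite_set (fun v => vertices r v /\
          exists p, path_from_to (right_cayley mul A) p v s).

Lemma s_below M : in_xS1 mul (r M) s.
Proof.
  apply NNPP. intros Hn. apply Hs.
  exists (map r (seq 0 M)).
  intros x [[i <-] [p Hp]]. apply in_map. apply in_seq.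
  destruct (Nat.lt_ge_cases i M) as [h|h]; [lia|].
  exfalso. apply Hn. apply xs_trans with (r i).
  replace i with ((i - M) + M) by lia. apply ray_xs.
  eapply path_xs; exact Hp.
Qed.

Lemma no_back d n m : ~ in_xS1 mul (pw (Datatypes.S d) (r n)) (r m).
Proof.
  intros H.
  assert (Hsm : forall M, in_xS1 mul (r M) (r m)).
  { intros M. apply xs_trans with s. apply s_below.
    apply xs_trans with (pw (Datatypes.S d) (r n)); auto.
    right. exists (pw d (r n)). reflexivity. }
  destruct (HR (r m)) as [l Hl].
  apply (@pigeon _ (fun k => r (k + m)) l).
  - intros i j Hij. destruct Hr as [Hi _]. apply Hi in Hij. lia.
  - intros k. apply Hl. intros z. split; intros Hz.
    + apply xs_trans with (r m); auto.
    + apply xs_trans with (r (k + m)); auto. apply ray_xs.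
Qed.

Lemma no_pre j k : j < k ->
  ~ preceq (right_cayley mul A) (vertices (fun i => pw k (r i)))
           (vertices (fun i => pw j (r i))).
Proof.
  intros Hjk [P [HP _]].
  destruct (HP 0) as [u [v [[n <-] [[m <-] Hp]]]].
  apply path_xs in Hp.
  replace k with (j + Datatypes.S (k - j - 1)) in Hp by lia.
  unfold pw at 1 in Hp. rewrite Nat.iter_add in Hp.
  change (in_xS1 mul (pw j (pw (Datatypes.S (k - j - 1)) (r n))) (pw j (r m))) in Hp. apply pw_cancel in Hp.
  eapply no_back; exact Hp.
Qed.

Lemma pre_refl (q : nat -> S) : (forall i j, q i = q j -> i = j) ->
  preceq (right_cayley mul A) (vertices q) (vertices q).
Proof.
  intros Hq. exists (fun n => [q n]). split.
  - intros n. exists (q n), (q n). split; [exists n; auto|].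
    split; [exists n; auto|]. split; [|split; reflexivity].
    split; [discriminate|]. split; [|exact I].
    constructor; [simpl; tauto|constructor].
  - intros n m x Hnm [<-|[]] [H|[]]. apply Hnm. apply Hq. symmetry; exact H.
Qed.

Definition Ek (k : nat) : (nat -> S) -> Prop := fun r' =>
  is_ray_or_antiray (right_cayley mul A) r' /\
  end_equiv (right_cayley mul A) (fun i => pw k (r i)) r'.

Lemma Ek_end k : is_end (right_cayley mul A) (Ek k).
Proof.
  exists (fun i => pw k (r i)). split.
  - left. apply ray_pw_is_ray.
  - intros r'. unfold Ek. tauto.
Qed.

Lemma Ek_inj i j : Ek i = Ek j -> i = j.
Proof.
  intros H.
  assert (Hi : Ek i (fun n => pw i (r n))).
  { split. left; apply ray_pw_is_ray.
    destruct (ray_pw_is_ray i) as [Hinj _].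
    split; apply pre_refl; exact Hinj. }
  rewrite H in Hi. destruct Hi as [_ [H1 H2]].
  destruct (Nat.lt_total i j) as [h|[h|h]]; auto.
  - exfalso. exact (no_pre _ _ h H1).
  - exfalso. exact (no_pre _ _ h H2).
Qed.

End Main.

Theorem mainTheorem11 (S : Type) (mul : S -> S -> S) (A : list S)
  (Hassoc : associative mul)
  (Hgen : generates mul A)
  (Hlc : left_cancellative mul)
  (HR : no_infinite_R_classes mul)
  (r : nat -> S) (Hr : is_ray (right_cayley mul A) r)
  (s : S)
  (Hs : infinite_set (fun v => vertices r v /\
          exists p, path_from_to (right_cayley mul A) p v s)) :
  ends_infinite (right_cayley mul A).
Proof.
  intros [l Hl].
  apply (@pigeon _ (Ek S mul A s r) l).
  - intros i j H. eapply Ek_inj; eauto.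
  - intros n. apply Hl. apply Ek_end; auto.
Qed.
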